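(* Let $d_1,d_2\in\mathbb{N}_+$ and $\boldsymbol\Theta\in[-1,1]^{d_1\times d_2}$. (a) $\max_{\pi\in[-1,1]}\mathrm{srank}(\boldsymbol\Theta-\pi)\le\mathrm{rank}(\boldsymbol\Theta)+1$. (b) If $\boldsymbol\Theta\in\mathcal{M}_{\mathrm{sgn}}(r)$, then $g(\boldsymbol\Theta)/\|g(\boldsymbol\Theta)\|_{\max}\in\mathcal{M}_{\mathrm{sgn}}(r+1)$ for every strictly monotonic function $g:\mathbb{R}\to\mathbb{R}$, where $g(\boldsymbol\Theta)$ denotes entrywise application of $g$. (c) For every dimension $d$, there exists a $d\times d$ matrix $\boldsymbol\Theta\in\mathcal{M}_{\mathrm{sgn}}(2)$ with $\mathrm{rank}(\boldsymbol\Theta)=d$.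
   Context: Sign convention: $\mathrm{sgn}(x)=1$ if $x>0$ and $-1$ otherwise, applied entrywise to matrices; $\boldsymbol\Theta-\pi$ subtracts $\pi$ from every entry. Sign rank: $\mathrm{srank}(\boldsymbol\Theta)=\min\{\mathrm{rank}(\boldsymbol\Theta'):\mathrm{sgn}(\boldsymbol\Theta')=\mathrm{sgn}(\boldsymbol\Theta)\}$. $\|\boldsymbol\Theta\|_{\max}=\max_{i,j}|\Theta_{ij}|$. For $r\in\mathbb{N}_+$, $\mathcal{M}_{\mathrm{sgn}}(r)=\{\boldsymbol\Theta:\max_{\pi\in[-1,1]}\mathrm{srank}(\boldsymbol\Theta-\pi)\le r,\ \|\boldsymbol\Theta\|_{\max}\le1\}$. *)

(* Defs.v *)
From HB Require Import structures.
From mathcomp Require Import all_boot all_order all_algebra.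
From mathcomp Require Import boolp reals.
Set Implicit Arguments. Unset Strict Implicit. Unset Printing Implicit Defensive.
Import Order.TTheory GRing.Theory Num.Theory.
Local Open Scope ring_scope.

Section SignRank.
Variable R : realType.

Definition sgn (x : R) : R := if 0 < x then 1 else -1.

Definition sgnmx m n (A : 'M[R]_(m, n)) : 'M[R]_(m, n) := map_mx sgn A.

Definition srank_pred m n (A : 'M[R]_(m, n)) : pred nat :=
  fun k => `[< exists B : 'M[R]_(m, n), sgnmx B = sgnmx A /\ \rank B = k >].

Lemma srank_ex m n (A : 'M[R]_(m, n)) : exists k, srank_pred A k.
Proof. by exists (\rank A); apply/asboolP; exists A. Qed.

Definition srank m n (A : 'M[R]_(m, n)) : nat := ex_minn (srank_ex A).

Definition mxmaxnorm m n (A : 'M[R]_(m, n)) : R :=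
  \big[Num.max/0]_(i < m) \big[Num.max/0]_(j < n) `|A i j|.

Definition mxsubc m n (A : 'M[R]_(m, n)) (pi : R) : 'M[R]_(m, n) :=
  A - const_mx pi.

Definition max_srank_le m n (A : 'M[R]_(m, n)) (r : nat) : Prop :=
  forall pi : R, -1 <= pi <= 1 -> (srank (mxsubc A pi) <= r)%N.

Definition M_sgn m n (r : nat) (A : 'M[R]_(m, n)) : Prop :=
  max_srank_le A r /\ mxmaxnorm A <= 1.

Definition strictly_monotonic (g : R -> R) : Prop :=
  (forall x y, x < y -> g x < g y) \/ (forall x y, x < y -> g y < g x).

End SignRank.

(* Main.v *)
Require Import Defs.
From HB Require Import structures.
From mathcomp Require Import all_boot all_order all_algebra.
From mathcomp Require Import boolp reals lra.
Import Order.TTheory GRing.Theory Num.Theory.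
Set Implicit Arguments. Unset Strict Implicit. Unset Printing Implicit Defensive.
Local Open Scope ring_scope.

Section Helpers.
Variable R : realType.

Lemma srank_le m n (A B : 'M[R]_(m, n)) :
  sgnmx B = sgnmx A -> (srank A <= \rank B)%N.
Proof.
move=> h; rewrite /srank; case: ex_minnP => k _ hk; apply: hk.
by apply/asboolP; exists B.
Qed.

Lemma srank_wit m n (A : 'M[R]_(m, n)) :
  exists B : 'M[R]_(m, n), sgnmx B = sgnmx A /\ \rank B = srank A.
Proof.
rewrite /srank; case: ex_minnP => k hk _.
by move/asboolP: hk.
Qed.

Lemma sgnmx_eq m n (X Y : 'M[R]_(m, n)) :
  (forall i j, (0 < X i j) = (0 < Y i j)) -> sgnmx X = sgnmx Y.
Proof. by move=> h; apply/matrixP=> i j; rewrite !mxE /sgn h. Qed.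

Lemma rank_const m n (a : R) : (\rank (const_mx a : 'M[R]_(m, n)) <= 1)%N.
Proof.
have -> : (const_mx a : 'M[R]_(m, n)) =
   (const_mx a : 'M[R]_(m, 1)) *m (const_mx 1 : 'M[R]_(1, n)).
  by apply/matrixP=> i j; rewrite !mxE big_ord1 !mxE mulr1.
exact: mulmx_max_rank.
Qed.

Lemma maxnorm_entry m n (A : 'M[R]_(m, n)) i j : `|A i j| <= mxmaxnorm A.
Proof.
rewrite /mxmaxnorm (bigD1 i) //= le_max; apply/orP; left.
by rewrite (bigD1 j) //= le_max lexx.
Qed.

Lemma maxnorm_le m n (A : 'M[R]_(m, n)) (c : R) :
  0 <= c -> (forall i j, `|A i j| <= c) -> mxmaxnorm A <= c.
Proof.
move=> c0 h; rewrite /mxmaxnorm; apply: (big_ind (fun x => x <= c)) => //.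
  by move=> x y hx hy; rewrite ge_max hx hy.
move=> i _; apply: (big_ind (fun x => x <= c)) => //.
by move=> x y hx hy; rewrite ge_max hx hy.
Qed.

Lemma maxnorm_ge0 m n (A : 'M[R]_(m, n)) : 0 <= mxmaxnorm A.
Proof.
rewrite /mxmaxnorm; apply: (big_ind (fun x => 0 <= x)) => //.
  by move=> x y hx hy; rewrite le_max hx.
move=> i _; apply: (big_ind (fun x => 0 <= x)) => //.
by move=> x y hx hy; rewrite le_max hx.
Qed.

Lemma seq_max (s : seq R) : s != [::] -> exists2 c, c \in s & forall x, x \in s -> x <= c.
Proof.
elim: s => // a [|b s] IH _.
  by exists a; rewrite ?mem_seq1 // => x; rewrite mem_seq1 => /eqP ->.
case: IH => // c cs hc.
have [ac|ca] := leP a c.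
  exists c; first by rewrite in_cons cs orbT.
  by move=> x; rewrite in_cons => /orP[/eqP->|/hc].
exists a; first by rewrite mem_head.
move=> x; rewrite in_cons => /orP[/eqP->//|/hc xc].
exact: le_trans xc (ltW ca).
Qed.

Definition entries m n (A : 'M[R]_(m, n)) : seq R :=
  [seq A ij.1 ij.2 | ij <- enum {: 'I_m * 'I_n}].

Lemma entries_mem m n (A : 'M[R]_(m, n)) i j : A i j \in entries A.
Proof. by apply/mapP; exists (i, j); rewrite ?mem_enum. Qed.

Lemma entries_P m n (A : 'M[R]_(m, n)) x :
  x \in entries A -> exists i j, x = A i j.
Proof. by case/mapP=> [[i j]] _ ->; exists i, j. Qed.

Lemma thresh m n (T : 'M[R]_(m, n)) (Q : R -> bool) :
  (forall i j, `|T i j| <= 1) ->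
  (forall x y, x <= y -> Q x -> Q y) ->
  (forall i j, Q (T i j)) \/
  exists p, -1 <= p <= 1 /\ forall i j, Q (T i j) = (p < T i j).
Proof.
move=> hT hQ.
set s := filter (predC Q) (entries T).
have [s0|sn0] := eqVneq s [::].
  left=> i j; apply/negPn/negP => nq.
  have : T i j \in s by rewrite mem_filter /= nq entries_mem.
  by rewrite s0.
right; case: (seq_max sn0) => p; rewrite mem_filter => /andP[/= nqp ps] hp.
case: (entries_P ps) => i0 [j0 pe].
exists p; split.
  by rewrite pe -ler_norml hT.
move=> i j; apply/idP/idP.
  move=> q; rewrite ltNge; apply/negP => tp.
  by move: nqp; rewrite (hQ _ _ tp q).
move=> pt; apply/negPn/negP => nq.
have : T i j <= p by apply: hp; rewrite mem_filter /= nq entries_mem.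
by rewrite leNgt pt.
Qed.

Lemma seq_min_pos (s : seq R) : exists2 e, 0 < e & forall x, x \in s -> 0 < x -> e < x.
Proof.
elim: s => [|a s [e e0 he]]; first by exists 1.
have [a0|a0] := ltP 0 a.
  exists (Num.min e (a / 2)); first by rewrite lt_min e0 divr_gt0.
  move=> x; rewrite in_cons => /orP[/eqP->|xs x0].
    move=> _; rewrite gt_min; apply/orP; right.
    by rewrite ltr_pdivrMr // ltr_pMr // ltr1n.
  by rewrite gt_min he.
exists e => // x; rewrite in_cons => /orP[/eqP-> ax|/he//].
by move: a0; rewrite leNgt ax.
Qed.

Lemma neg_pattern m n (B : 'M[R]_(m, n)) : exists B' : 'M[R]_(m, n),
  (forall i j, (0 < B' i j) = ~~ (0 < B i j)) /\ (\rank B' <= (\rank B).+1)%N.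
Proof.
case: (seq_min_pos (entries B)) => e e0 he.
exists (const_mx e - B); split.
  move=> i j; rewrite !mxE subr_gt0 -leNgt.
  apply/idP/idP => h.
    rewrite leNgt; apply/negP => b0.
    by move: (he _ (entries_mem B i j) b0); rewrite ltNge (ltW h).
  exact: le_lt_trans h e0.
apply: leq_trans (mxrank_add _ _) _.
by rewrite mxrank_opp addnC -addn1 leq_add2l rank_const.
Qed.

Lemma sgn_pos (x y : R) : sgn x = sgn y -> (0 < x) = (0 < y).
Proof.
rewrite /sgn; case: ifP; case: ifP => // _ _ h.
  by move: (congr1 (fun z => 0 < z) h); rewrite ltr01 oppr_gt0 ltr10.
by move: (congr1 (fun z => 0 < z) h); rewrite ltr01 oppr_gt0 ltr10.
Qed.

Lemma sgnmx_pos m n (X Y : 'M[R]_(m, n)) i j :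
  sgnmx X = sgnmx Y -> (0 < X i j) = (0 < Y i j).
Proof.
by move=> h; apply: sgn_pos; move: (congr1 (fun M : 'M[R]_(m,n) => M i j) h); rewrite !mxE.
Qed.
End Helpers.

Theorem proposition2 (R : realType) :
  (* (a) *)
  (forall (d1 d2 : nat) (Theta : 'M[R]_(d1, d2)),
      (0 < d1)%N -> (0 < d2)%N -> mxmaxnorm Theta <= 1 ->
      max_srank_le Theta (\rank Theta).+1)
  /\
  (* (b) *)
  (forall (d1 d2 r : nat) (Theta : 'M[R]_(d1, d2)),
      (0 < d1)%N -> (0 < d2)%N -> (0 < r)%N -> mxmaxnorm Theta <= 1 ->
      M_sgn r Theta ->
      forall g : R -> R, strictly_monotonic g ->
        M_sgn r.+1 ((mxmaxnorm (map_mx g Theta))^-1 *: map_mx g Theta))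
  /\
  (* (c) *)
  (forall d : nat, exists Theta : 'M[R]_d, M_sgn 2 Theta /\ \rank Theta = d).
Proof.
split.
  move=> d1 d2 T _ _ _ pi _.
  apply: leq_trans (srank_le (erefl _)) _.
  rewrite /mxsubc; apply: leq_trans (mxrank_add _ _) _.
  by rewrite mxrank_opp -addn1 leq_add2l rank_const.
split.
  move=> d1 d2 r T _ _ _ hT [hs _] g hg.
  set G := map_mx g T; set c := mxmaxnorm G.
  have hTe : forall i j, `|T i j| <= 1 by move=> i j; exact: le_trans (maxnorm_entry _ _ _) hT.
  have c0 : 0 <= c by exact: maxnorm_ge0.
  have [cz|cp] := eqVneq c 0.
    rewrite cz invr0 scale0r; split; last by apply: maxnorm_le => // i j; rewrite mxE normr0.
    move=> pi _; apply: leq_trans (srank_le (erefl _)) _.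
    rewrite /mxsubc sub0r mxrank_opp; exact: leq_trans (rank_const _ _ _) _.
  have cgt : 0 < c by rewrite lt_def cp c0.
  split; last first.
    apply: maxnorm_le => // i j; rewrite mxE normrM ger0_norm ?invr_ge0 //.
    by rewrite ler_pdivrMl // mulr1 maxnorm_entry.
  move=> pi hpi.
  set P := fun x => c * pi < g x.
  have key : forall i j, (0 < mxsubc (c^-1 *: G) pi i j) = P (T i j).
    by move=> i j; rewrite !mxE subr_gt0 ltr_pdivlMl.
  case: hg => hg.
    have hQ : forall x y, x <= y -> P x -> P y.
      move=> x y; rewrite le_eqVlt => /orP[/eqP->//|xy] px.
      exact: lt_trans px (hg _ _ xy).
    case: (thresh hTe hQ) => [hall|[p [hp hpe]]].
      apply: leq_trans (srank_le (B := const_mx 1) _) _.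
        by apply: sgnmx_eq => i j; rewrite key hall mxE ltr01.
      exact: leq_trans (rank_const _ _ _) _.
    case: (srank_wit (mxsubc T p)) => B [hB hr].
    apply: leq_trans (srank_le (B := B) _) _.
      apply: sgnmx_eq => i j; rewrite key hpe (sgnmx_pos i j hB) !mxE subr_gt0 //.
    by rewrite hr; apply: leq_trans (hs p hp) _.
  have hQ : forall x y, x <= y -> ~~ P x -> ~~ P y.
    move=> x y; rewrite le_eqVlt => /orP[/eqP->//|xy]; apply: contra => py.
    exact: lt_trans py (hg _ _ xy).
  case: (thresh hTe hQ) => [hall|[p [hp hpe]]].
    apply: leq_trans (srank_le (B := const_mx (-1)) _) _.
      by apply: sgnmx_eq => i j; rewrite key mxE oppr_gt0 ltr10; apply/esym/negbTE/hall.
    exact: leq_trans (rank_const _ _ _) _.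
  case: (srank_wit (mxsubc T p)) => B [hB hr].
  case: (neg_pattern B) => B' [hB' hr'].
  apply: leq_trans (srank_le (B := B') _) _.
    apply: sgnmx_eq => i j; rewrite key hB' (sgnmx_pos i j hB) !mxE subr_gt0.
    by rewrite -hpe negbK.
  by apply: leq_trans hr' _; rewrite ltnS hr hs.
move=> d.
pose T : 'M[R]_d := \matrix_(i, j) (if (j <= i)%N then 1 else 0).
exists T; split; last first.
  apply: mxrank_unit; rewrite unitmxE det_trig.
    by rewrite big1 ?unitr1 // => i _; rewrite mxE leqnn.
  by apply/is_trig_mxP => i j ij; rewrite mxE leqNgt ij.
split; last first.
  apply: maxnorm_le => // i j; rewrite mxE; case: ifP => _; rewrite ?normr1 ?normr0 ?ler01 ?lexx //.
move=> pi _.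
pose e : R := if pi < 0 then d%:R else if pi < 1 then 2^-1 else - d%:R.
pose U : 'M[R]_(d, 2) := \matrix_(i, k) (if val k == 0%N then (val i)%:R else 1).
pose V : 'M[R]_(2, d) := \matrix_(k, j) (if val k == 0%N then 1 else e - (val j)%:R).
apply: leq_trans (srank_le (B := U *m V) _) (mulmx_max_rank _ _).
apply: sgnmx_eq => i j.
rewrite !mxE big_ord_recl big_ord1 !mxE /= mulr1 mul1r.
have hi : (val i)%:R < d%:R :> R by rewrite ltr_nat ltn_ord.
have hj : (val j)%:R < d%:R :> R by rewrite ltr_nat ltn_ord.
have i0 : 0 <= (val i)%:R :> R by rewrite ler0n.
have j0 : 0 <= (val j)%:R :> R by rewrite ler0n.
rewrite subr_gt0 /e.
case: ifP => p0.
  apply/idP/idP => _; last lra.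
  by case: ifP => _; lra.
case: ifP => p1.
  case: leqP => ji.
    have : (val j)%:R <= (val i)%:R :> R by rewrite ler_nat.
    move: p0 => /negbT; rewrite -leNgt => p0 h.
    apply/idP/idP => _; lra.
  have : (val i).+1%:R <= (val j)%:R :> R by rewrite ler_nat.
  rewrite -natr1 => h.
  move: p0 => /negbT; rewrite -leNgt => p0.
  apply/idP/idP => hh; lra.
move: p1 => /negbT; rewrite -leNgt => p1.
apply/idP/idP => hh; last by case: ifP hh => _; lra.
lra.
Qed.
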